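(* Let $M$ be a timelike surface in $\mathbb{R}^{n,1}$ with a canonical null direction with respect to a constant unit spacelike vector $Z$. Then $\langle II(Z^\top,X),Z^\perp\rangle=0$ for every tangent $X$; equivalently $A_{Z^{\perp}}(Z^{\top})=0$. Moreover $\nabla_{Z^{\top}}Z^{\top}=0$.
   Context: $\mathbb{R}^{n,1}$ is $\mathbb{R}^{n+1}$ with the metric $-dx_1^2+dx_2^2+\dots+dx_{n+1}^2$. A surface is timelike if the induced metric has signature $(1,1)$; a vector $v$ is lightlike if $v\ne0$ and $\langle v,v\rangle=0$. For a constant vector $Z$, $Z=Z^\top+Z^\perp$ along $M$ (tangent and normal parts); $M$ has a canonical null direction with respect to $Z$ if $Z^\top$ is lightlike everywhere on $M$. $\nabla$ is the Levi-Civita connection of $M$, $II$ the second fundamental form, $A_\nu$ the shape operator ($\langle A_\nu X,Y\rangle=\langle II(X,Y),\nu\rangle$). *)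

(* Defs.v *)
From Stdlib Require Import Reals.
Open Scope R_scope.

(** Vectors of R^{n,1}: coordinates 0..n of a function nat -> R
    (coordinate 0 is the timelike one; higher coordinates are ignored). *)
Definition vec := nat -> R.

Fixpoint ssum (k : nat) (u v : vec) : R :=
  match k with
  | O => 0
  | S k' => ssum k' u v + u (S k') * v (S k')
  end.

Definition mink (n : nat) (u v : vec) : R := - (u O * v O) + ssum n u v.

Definition lin2 (a b : R) (u v : vec) : vec := fun i => a * u i + b * v i.

Definition vzero (n : nat) (v : vec) : Prop := forall i, (i <= n)%nat -> v i = 0.

Definition lightlike (n : nat) (v : vec) : Prop := ~ vzero n v /\ mink n v v = 0.

(** The induced metric has signature (1,1): there is an
    orthonormal basis of the tangent plane consisting of a timelike and a
    spacelike unit vector (this also forces fs, ft to be independent). *)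
Definition timelike_plane (n : nat) (fs ft : vec) : Prop :=
  exists a1 b1 a2 b2 : R,
    mink n (lin2 a1 b1 fs ft) (lin2 a1 b1 fs ft) = -1 /\
    mink n (lin2 a2 b2 fs ft) (lin2 a2 b2 fs ft) = 1 /\
    mink n (lin2 a1 b1 fs ft) (lin2 a2 b2 fs ft) = 0.

(** The tangent vector W = a fs + b ft with <W,fs> = c1, <W,ft> = c2
    (inverse of the Gram matrix of the induced metric). *)
Definition riesz_a (n : nat) (fs ft : vec) (c1 c2 : R) : R :=
  let E := mink n fs fs in let F := mink n fs ft in let G := mink n ft ft in
  (G * c1 - F * c2) / (E * G - F * F).
Definition riesz_b (n : nat) (fs ft : vec) (c1 c2 : R) : R :=
  let E := mink n fs fs in let F := mink n fs ft in let G := mink n ft ft in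
  (E * c2 - F * c1) / (E * G - F * F).
Definition riesz (n : nat) (fs ft : vec) (c1 c2 : R) : vec :=
  lin2 (riesz_a n fs ft c1 c2) (riesz_b n fs ft c1 c2) fs ft.

Definition tcoef_a (n : nat) (fs ft V : vec) : R := riesz_a n fs ft (mink n V fs) (mink n V ft).
Definition tcoef_b (n : nat) (fs ft V : vec) : R := riesz_b n fs ft (mink n V fs) (mink n V ft).
Definition tproj (n : nat) (fs ft V : vec) : vec := riesz n fs ft (mink n V fs) (mink n V ft).
Definition nproj (n : nat) (fs ft V : vec) : vec := fun i => V i - tproj n fs ft V i.

(** Second fundamental form II(X,Y) = (D_X Y)^perp for X = x1 f_s + x2 f_t,
    Y = y1 f_s + y2 f_t, where fss = d_s f_s, fst = d_t f_s, fts = d_s f_t,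
    ftt = d_t f_t. *)
Definition sff (n : nat) (fs ft fss fst fts ftt : vec) (x1 x2 y1 y2 : R) : vec :=
  nproj n fs ft (fun i => x1 * y1 * fss i + x1 * y2 * fts i
                          + x2 * y1 * fst i + x2 * y2 * ftt i).

(** Shape operator: A_nu X is the tangent vector with
    <A_nu X, Y> = <II(X,Y), nu> for all tangent Y. *)
Definition shape (n : nat) (fs ft fss fst fts ftt nu : vec) (x1 x2 : R) : vec :=
  riesz n fs ft (mink n (sff n fs ft fss fst fts ftt x1 x2 1 0) nu)
                (mink n (sff n fs ft fss fst fts ftt x1 x2 0 1) nu).

Definition open2 (U : R -> R -> Prop) : Prop :=
  forall s t, U s t -> exists eps, 0 < eps /\
    forall s' t', Rabs (s' - s) < eps -> Rabs (t' - t) < eps -> U s' t'.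

Definition cont2_on (U : R -> R -> Prop) (g : R -> R -> R) : Prop :=
  forall s t, U s t -> forall eps, 0 < eps -> exists delta, 0 < delta /\
    forall s' t', Rabs (s' - s) < delta -> Rabs (t' - t) < delta ->
      Rabs (g s' t' - g s t) < eps.

Definition C2_patch (n : nat) (U : R -> R -> Prop) (f fs ft fss fst fts ftt : R -> R -> vec) : Prop :=
  (forall s t, U s t -> forall i, (i <= n)%nat ->
     derivable_pt_lim (fun x => f x t i) s (fs s t i) /\
     derivable_pt_lim (fun y => f s y i) t (ft s t i) /\
     derivable_pt_lim (fun x => fs x t i) s (fss s t i) /\
     derivable_pt_lim (fun y => fs s y i) t (fst s t i) /\
     derivable_pt_lim (fun x => ft x t i) s (fts s t i) /\
     derivable_pt_lim (fun y => ft s y i) t (ftt s t i)) /\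
  (forall i, (i <= n)%nat ->
     cont2_on U (fun s t => fss s t i) /\ cont2_on U (fun s t => fst s t i) /\
     cont2_on U (fun s t => fts s t i) /\ cont2_on U (fun s t => ftt s t i)).

(* Main.v *)
Require Import Defs.
From Coquelicot Require Import Coquelicot.
From Stdlib Require Import Reals Lra Lia.
Open Scope R_scope.

Definition exd (g : R -> R) x := exists l, derivable_pt_lim g x l.
Lemma exd_plus f g x : exd f x -> exd g x -> exd (fun y => f y + g y) x.
Proof. intros [a Ha] [b Hb]. exists (a+b). apply (derivable_pt_lim_plus f g x a b); auto. Qed.
Lemma exd_minus f g x : exd f x -> exd g x -> exd (fun y => f y - g y) x.
Proof. intros [a Ha] [b Hb]. exists (a-b). apply (derivable_pt_lim_minus f g x a b); auto. Qed.
Lemma exd_mult f g x : exd f x -> exd g x -> exd (fun y => f y * g y) x.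
Proof. intros [a Ha] [b Hb]. eexists. apply (derivable_pt_lim_mult f g x a b); auto. Qed.
Lemma exd_opp f x : exd f x -> exd (fun y => - f y) x.
Proof. intros [a Ha]. eexists. apply (derivable_pt_lim_opp f x a); auto. Qed.
Lemma exd_div f g x : exd f x -> exd g x -> g x <> 0 -> exd (fun y => f y / g y) x.
Proof. intros [a Ha] [b Hb] H. eexists. apply (derivable_pt_lim_div f g x a b); auto. Qed.
Lemma exd_const c x : exd (fun _ => c) x.
Proof. exists 0. apply derivable_pt_lim_const. Qed.

Lemma dl_eq f x l l' : derivable_pt_lim f x l -> l = l' -> derivable_pt_lim f x l'.
Proof. intros H ->; exact H. Qed.

Lemma exd_ssum n (u v : R -> vec) x :
  (forall i, (i <= n)%nat -> exd (fun y => u y i) x) ->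
  (forall i, (i <= n)%nat -> exd (fun y => v y i) x) ->
  forall k, (k <= n)%nat -> exd (fun y => ssum k (u y) (v y)) x.
Proof.
  intros Hu Hv k. induction k; intros Hk; simpl.
  - apply exd_const.
  - apply exd_plus. apply IHk; lia. apply exd_mult; [apply Hu|apply Hv]; lia.
Qed.

Lemma exd_mink n (u v : R -> vec) x :
  (forall i, (i <= n)%nat -> exd (fun y => u y i) x) ->
  (forall i, (i <= n)%nat -> exd (fun y => v y i) x) ->
  exd (fun y => mink n (u y) (v y)) x.
Proof.
  intros Hu Hv. unfold mink. apply exd_plus. apply exd_opp. apply exd_mult; [apply Hu|apply Hv]; lia.
  apply (exd_ssum n); auto.
Qed.

Lemma dl_ssum n (u v : R -> vec) du dv x :
  (forall i, (i <= n)%nat -> derivable_pt_lim (fun y => u y i) x (du i)) ->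
  (forall i, (i <= n)%nat -> derivable_pt_lim (fun y => v y i) x (dv i)) ->
  forall k, (k <= n)%nat -> derivable_pt_lim (fun y => ssum k (u y) (v y)) x
     (ssum k du (v x) + ssum k (u x) dv).
Proof.
  intros Hu Hv k. induction k; intros Hk; simpl.
  - eapply dl_eq. apply derivable_pt_lim_const. ring.
  - eapply dl_eq. apply (derivable_pt_lim_plus (fun y => ssum k (u y) (v y))
        (fun y => u y (S k) * v y (S k))). apply IHk; lia.
    apply (derivable_pt_lim_mult (fun y => u y (S k)) (fun y => v y (S k))).
    apply Hu; lia. apply Hv; lia. ring.
Qed.

Lemma dl_mink n (u v : R -> vec) du dv x :
  (forall i, (i <= n)%nat -> derivable_pt_lim (fun y => u y i) x (du i)) ->
  (forall i, (i <= n)%nat -> derivable_pt_lim (fun y => v y i) x (dv i)) ->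
  derivable_pt_lim (fun y => mink n (u y) (v y)) x
     (mink n du (v x) + mink n (u x) dv).
Proof.
  intros Hu Hv. unfold mink. eapply dl_eq.
  apply (derivable_pt_lim_plus (fun y => - (u y 0%nat * v y 0%nat)) (fun y => ssum n (u y) (v y))).
  apply (derivable_pt_lim_opp (fun y => u y 0%nat * v y 0%nat)).
  apply (derivable_pt_lim_mult (fun y => u y 0%nat) (fun y => v y 0%nat)).
  apply Hu; lia. apply Hv; lia.
  apply (dl_ssum n); auto. ring.
Qed.

Lemma ssum_sym k u v : ssum k u v = ssum k v u.
Proof. induction k; simpl; [ring|rewrite IHk; ring]. Qed.
Lemma mink_sym n u v : mink n u v = mink n v u.
Proof. unfold mink. rewrite ssum_sym. ring. Qed.
Lemma ssum_lin k a b u v w : ssum k (lin2 a b u v) w = a * ssum k u w + b * ssum k v w.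
Proof. induction k; simpl; [ring|rewrite IHk; unfold lin2; ring]. Qed.
Lemma mink_lin n a b u v w : mink n (lin2 a b u v) w = a * mink n u w + b * mink n v w.
Proof. unfold mink. rewrite ssum_lin. unfold lin2. ring. Qed.
Lemma ssum_sub k u v w : ssum k (fun i => u i - v i) w = ssum k u w - ssum k v w.
Proof. induction k; simpl; [ring|rewrite IHk; ring]. Qed.
Lemma mink_sub n u v w : mink n (fun i => u i - v i) w = mink n u w - mink n v w.
Proof. unfold mink. rewrite ssum_sub. ring. Qed.
Lemma ssum_zero k w : ssum k (fun _ => 0) w = 0.
Proof. induction k; simpl; [ring|rewrite IHk; ring]. Qed.
Lemma mink_zero n w : mink n (fun _ => 0) w = 0.
Proof. unfold mink. rewrite ssum_zero. ring. Qed.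
Lemma ssum_4 k c1 c2 c3 c4 u1 u2 u3 u4 w :
  ssum k (fun i => c1 * u1 i + c2 * u2 i + c3 * u3 i + c4 * u4 i) w =
  c1 * ssum k u1 w + c2 * ssum k u2 w + c3 * ssum k u3 w + c4 * ssum k u4 w.
Proof. induction k; simpl; [ring|rewrite IHk; ring]. Qed.
Lemma mink_4 n c1 c2 c3 c4 u1 u2 u3 u4 w :
  mink n (fun i => c1 * u1 i + c2 * u2 i + c3 * u3 i + c4 * u4 i) w =
  c1 * mink n u1 w + c2 * mink n u2 w + c3 * mink n u3 w + c4 * mink n u4 w.
Proof. unfold mink. rewrite ssum_4. ring. Qed.
Lemma ssum_ext n k u u' v v' : (k <= n)%nat -> (forall i, (i <= n)%nat -> u i = u' i) ->
  (forall i, (i <= n)%nat -> v i = v' i) -> ssum k u v = ssum k u' v'.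
Proof. intros Hk Hu Hv. induction k; simpl. ring. rewrite IHk by lia. rewrite Hu, Hv by lia. ring. Qed.
Lemma mink_ext n u u' v v' : (forall i, (i <= n)%nat -> u i = u' i) ->
  (forall i, (i <= n)%nat -> v i = v' i) -> mink n u v = mink n u' v'.
Proof. intros Hu Hv. unfold mink. rewrite (ssum_ext n n u u' v v') by auto. rewrite Hu, Hv by lia. ring. Qed.

Definition gram n (u v : vec) := mink n u u * mink n v v - mink n u v * mink n u v.

Lemma gram_lin n a b c d u v : mink n (lin2 a b u v) (lin2 c d u v) =
  a*c*mink n u u + (a*d+b*c)*mink n u v + b*d*mink n v v.
Proof.
  rewrite mink_lin. rewrite (mink_sym n u), (mink_sym n v), !mink_lin.
  rewrite (mink_sym n v u). ring.
Qed.

Lemma timelike_gram n u v : timelike_plane n u v -> gram n u v <> 0.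
Proof.
  intros (a1&b1&a2&b2&h1&h2&h3). rewrite !gram_lin in *. unfold gram.
  intro H.
  assert (K: (a1*b2-a2*b1)^2*(mink n u u * mink n v v - mink n u v * mink n u v) =
     (a1*a1*mink n u u + (a1*b1+b1*a1)*mink n u v + b1*b1*mink n v v) *
     (a2*a2*mink n u u + (a2*b2+b2*a2)*mink n u v + b2*b2*mink n v v) -
     (a1*a2*mink n u u + (a1*b2+b1*a2)*mink n u v + b1*b2*mink n v v)^2) by ring.
  rewrite h1, h2, h3, H in K. lra.
Qed.

Lemma riesz_1 n u v c1 c2 : gram n u v <> 0 -> mink n (riesz n u v c1 c2) u = c1.
Proof.
  intros H. unfold gram in H. unfold riesz. rewrite mink_lin. rewrite (mink_sym n v u).
  unfold riesz_a, riesz_b. cbv zeta. field. auto.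
Qed.
Lemma riesz_2 n u v c1 c2 : gram n u v <> 0 -> mink n (riesz n u v c1 c2) v = c2.
Proof.
  intros H. unfold gram in H. unfold riesz. rewrite mink_lin.
  unfold riesz_a, riesz_b. cbv zeta. field. auto.
Qed.
Lemma riesz_0 n u v i : riesz n u v 0 0 i = 0.
Proof. unfold riesz, lin2, riesz_a, riesz_b. cbv zeta. unfold Rdiv. ring. Qed.

Lemma exd_tproj n (u v : R -> vec) (Z : vec) x :
  (forall i, (i <= n)%nat -> exd (fun y => u y i) x) ->
  (forall i, (i <= n)%nat -> exd (fun y => v y i) x) ->
  gram n (u x) (v x) <> 0 ->
  forall i, (i <= n)%nat -> exd (fun y => tproj n (u y) (v y) Z i) x.
Proof.
  intros Hu Hv Hg i Hi. unfold gram in Hg.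
  unfold tproj, riesz, lin2, riesz_a, riesz_b. cbv zeta.
  assert (Hc : forall j, (j <= n)%nat -> exd (fun _ : R => Z j) x) by (intros; apply exd_const).
  repeat first [ apply exd_mink | apply exd_div | apply exd_minus | apply exd_plus | apply exd_mult
               | apply Hu | apply Hv | apply Hc | exact Hg | exact Hi ].
Qed.

Lemma loc_of (x eps:R) (P : R -> Prop) : 0<eps -> (forall y, Rabs(y-x)<eps -> P y) -> locally x P.
Proof. intros H H0. exists (mkposreal eps H). intros y Hy. apply H0. exact Hy. Qed.

Lemma deriv_loc_eq (f g : R -> R) x eps l1 l2 : 0 < eps ->
  (forall y, Rabs (y - x) < eps -> f y = g y) ->
  derivable_pt_lim f x l1 -> derivable_pt_lim g x l2 -> l1 = l2.
Proof.
  intros He Heq H1 H2. apply is_derive_Reals in H1. apply is_derive_Reals in H2.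
  apply (is_derive_ext_loc f g) in H1. apply is_derive_unique in H1. apply is_derive_unique in H2.
  congruence. apply (loc_of x eps); auto.
Qed.
Lemma open_row U s t : open2 U -> U s t -> exists eps, 0 < eps /\ forall s', Rabs (s' - s) < eps -> U s' t.
Proof. intros Ho HU. destruct (Ho s t HU) as (e&He&H). exists e; split; auto.
  intros; apply H; auto. replace (t-t) with 0 by ring. rewrite Rabs_R0; auto. Qed.
Lemma open_col U s t : open2 U -> U s t -> exists eps, 0 < eps /\ forall t', Rabs (t' - t) < eps -> U s t'.
Proof. intros Ho HU. destruct (Ho s t HU) as (e&He&H). exists e; split; auto.
  intros; apply H; auto. replace (s-s) with 0 by ring. rewrite Rabs_R0; auto. Qed.

Lemma schwarz_gen (U : R -> R -> Prop) (F Fs Ft Fst Fts : R -> R -> R) s t :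
  open2 U -> U s t ->
  (forall u v, U u v -> derivable_pt_lim (fun x => F x v) u (Fs u v) /\
     derivable_pt_lim (fun y => F u y) v (Ft u v) /\
     derivable_pt_lim (fun y => Fs u y) v (Fst u v) /\
     derivable_pt_lim (fun x => Ft x v) u (Fts u v)) ->
  cont2_on U Fst -> cont2_on U Fts -> Fst s t = Fts s t.
Proof.
  intros Ho HU HD Cst Cts.
  assert (A : forall u v, U u v -> Derive (fun y => F u y) v = Ft u v).
  { intros u v H. apply is_derive_unique, is_derive_Reals. apply HD; auto. }
  assert (B : forall u v, U u v -> Derive (fun x => F x v) u = Fs u v).
  { intros u v H. apply is_derive_unique, is_derive_Reals. apply HD; auto. }
  assert (C : forall u v, U u v -> is_derive (fun z => Derive (fun y => F z y) v) u (Fts u v)).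
  { intros u v H. destruct (open_row U u v Ho H) as (e&He&Hr).
    apply (is_derive_ext_loc (fun z => Ft z v)). apply (loc_of u e); auto.
    intros y Hy. rewrite A; auto. apply is_derive_Reals. apply HD; auto. }
  assert (D : forall u v, U u v -> is_derive (fun z => Derive (fun y => F y z) u) v (Fst u v)).
  { intros u v H. destruct (open_col U u v Ho H) as (e&He&Hr).
    apply (is_derive_ext_loc (fun z => Fs u z)). apply (loc_of v e); auto.
    intros y Hy. rewrite B; auto. apply is_derive_Reals. apply HD; auto. }
  destruct (Ho s t HU) as (e&He&HUe).
  assert (Sw := Schwarz F s t).
  rewrite <- (is_derive_unique _ _ _ (C s t HU)), <- (is_derive_unique _ _ _ (D s t HU)).
  symmetry; apply Sw.
  - exists (mkposreal e He). intros u v Hu Hv. simpl in *. assert (H := HUe u v Hu Hv).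
    split; [|split; [|split]].
    + exists (Fs u v). apply is_derive_Reals. apply HD; auto.
    + exists (Ft u v). apply is_derive_Reals. apply HD; auto.
    + exists (Fts u v). apply C; auto.
    + exists (Fst u v). apply D; auto.
  - intros eps. destruct (Cts s t HU eps (cond_pos eps)) as (d&Hd&Hc).
    assert (Hm : 0 < Rmin d e) by (apply Rmin_pos; auto).
    exists (mkposreal _ Hm). intros u v Hu Hv. simpl in *.
    assert (Hu1 : Rabs (u - s) < d) by (eapply Rlt_le_trans; [exact Hu| apply Rmin_l]).
    assert (Hu2 : Rabs (u - s) < e) by (eapply Rlt_le_trans; [exact Hu| apply Rmin_r]).
    assert (Hv1 : Rabs (v - t) < d) by (eapply Rlt_le_trans; [exact Hv| apply Rmin_l]).
    assert (Hv2 : Rabs (v - t) < e) by (eapply Rlt_le_trans; [exact Hv| apply Rmin_r]).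
    rewrite (is_derive_unique _ _ _ (C u v (HUe u v Hu2 Hv2))), (is_derive_unique _ _ _ (C s t HU)).
    apply Hc; auto.
  - intros eps. destruct (Cst s t HU eps (cond_pos eps)) as (d&Hd&Hc).
    assert (Hm : 0 < Rmin d e) by (apply Rmin_pos; auto).
    exists (mkposreal _ Hm). intros u v Hu Hv. simpl in *.
    assert (Hu1 : Rabs (u - s) < d) by (eapply Rlt_le_trans; [exact Hu| apply Rmin_l]).
    assert (Hu2 : Rabs (u - s) < e) by (eapply Rlt_le_trans; [exact Hu| apply Rmin_r]).
    assert (Hv1 : Rabs (v - t) < d) by (eapply Rlt_le_trans; [exact Hv| apply Rmin_l]).
    assert (Hv2 : Rabs (v - t) < e) by (eapply Rlt_le_trans; [exact Hv| apply Rmin_r]).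
    rewrite (is_derive_unique _ _ _ (D u v (HUe u v Hu2 Hv2))), (is_derive_unique _ _ _ (D s t HU)).
    apply Hc; auto.
Qed.
Lemma key1 n (T w : R -> vec) dw W Z x eps : 0 < eps ->
  (forall y, Rabs (y - x) < eps -> mink n (T y) (w y) = mink n Z (w y)) ->
  (forall i, (i <= n)%nat -> derivable_pt_lim (fun y => T y i) x (W i)) ->
  (forall i, (i <= n)%nat -> derivable_pt_lim (fun y => w y i) x (dw i)) ->
  mink n W (w x) = mink n (fun i => Z i - T x i) dw.
Proof.
  intros He Heq HT Hw.
  assert (E := deriv_loc_eq _ _ x eps _ _ He Heq (dl_mink n T w W dw x HT Hw)
     (dl_mink n (fun _ => Z) w (fun _ => 0) dw x (fun i _ => derivable_pt_lim_const (Z i) x) Hw)).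
  rewrite mink_zero in E. rewrite mink_sub. lra.
Qed.

Lemma keyN n (T : R -> vec) W x eps : 0 < eps ->
  (forall y, Rabs (y - x) < eps -> mink n (T y) (T y) = 0) ->
  (forall i, (i <= n)%nat -> derivable_pt_lim (fun y => T y i) x (W i)) ->
  mink n W (T x) = 0.
Proof.
  intros He Heq HT.
  assert (E := deriv_loc_eq _ _ x eps _ _ He Heq (dl_mink n T T W W x HT HT)
     (derivable_pt_lim_const 0 x)).
  rewrite (mink_sym n (T x) W) in E. lra.
Qed.

Lemma exd_dl g x : exd g x -> derivable_pt_lim g x (Derive g x).
Proof. intros [l H]. apply is_derive_Reals. apply Derive_correct. exists l. apply is_derive_Reals; auto. Qed.

Theorem mainTheorem2 (n : nat) (U : R -> R -> Prop)
  (f fs ft fss fst fts ftt : R -> R -> vec) (Z : vec) :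
  open2 U ->
  C2_patch n U f fs ft fss fst fts ftt ->
  (* M is a timelike surface *)
  (forall s t, U s t -> timelike_plane n (fs s t) (ft s t)) ->
  (* Z is a constant unit spacelike vector *)
  mink n Z Z = 1 ->
  (* canonical null direction: Z^T lightlike everywhere on M *)
  (forall s t, U s t -> lightlike n (tproj n (fs s t) (ft s t) Z)) ->
  forall s t, U s t ->
    let p := fs s t in let q := ft s t in
    let a := tcoef_a n p q Z in let b := tcoef_b n p q Z in
    let Zperp := nproj n p q Z in
    (* <II(Z^T, X), Z^perp> = 0 for every tangent X = x1 f_s + x2 f_t *)
    (forall x1 x2 : R,
       mink n (sff n p q (fss s t) (fst s t) (fts s t) (ftt s t) a b x1 x2) Zperp = 0) /\
    (* A_{Z^perp}(Z^T) = 0 *)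
    vzero n (shape n p q (fss s t) (fst s t) (fts s t) (ftt s t) Zperp a b) /\
    (* nabla_{Z^T} Z^T = (D_{Z^T} Z^T)^T = 0 *)
    (exists Ws Wt : vec,
       (forall i, (i <= n)%nat ->
          derivable_pt_lim (fun x => tproj n (fs x t) (ft x t) Z i) s (Ws i) /\
          derivable_pt_lim (fun y => tproj n (fs s y) (ft s y) Z i) t (Wt i)) /\
       vzero n (tproj n p q (lin2 a b Ws Wt))).
Proof.
  intros Ho [HD HCt] Htl HZ Hll s t HU. cbv zeta.
  assert (Hg : forall x y, U x y -> gram n (fs x y) (ft x y) <> 0).
  { intros x y H. apply timelike_gram. auto. }
  set (T := fun x y => tproj n (fs x y) (ft x y) Z).
  set (Ws := fun i => Derive (fun x => T x t i) s).
  set (Wt := fun i => Derive (fun y => T s y i) t).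
  assert (HWs : forall i, (i <= n)%nat -> derivable_pt_lim (fun x => T x t i) s (Ws i)).
  { intros i Hi. apply exd_dl. unfold T.
    apply (exd_tproj n (fun x => fs x t) (fun x => ft x t)); auto.
    - intros j Hj. exists (fss s t j). apply HD; auto.
    - intros j Hj. exists (fts s t j). apply HD; auto. }
  assert (HWt : forall i, (i <= n)%nat -> derivable_pt_lim (fun y => T s y i) t (Wt i)).
  { intros i Hi. apply exd_dl. unfold T.
    apply (exd_tproj n (fun y => fs s y) (fun y => ft s y)); auto.
    - intros j Hj. exists (fst s t j). apply HD; auto.
    - intros j Hj. exists (ftt s t j). apply HD; auto. }
  destruct (open_row U s t Ho HU) as (e1&He1&Hr).
  destruct (open_col U s t Ho HU) as (e2&He2&Hc).
  set (Zp := nproj n (fs s t) (ft s t) Z).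
  assert (I1 : mink n Ws (fs s t) = mink n Zp (fss s t)).
  { apply (key1 n (fun x => T x t) (fun x => fs x t) _ _ Z s e1); auto.
    - intros y Hy. unfold T, tproj. apply riesz_1. apply Hg; auto.
    - intros j Hj. apply HD; auto. }
  assert (I2 : mink n Ws (ft s t) = mink n Zp (fts s t)).
  { apply (key1 n (fun x => T x t) (fun x => ft x t) _ _ Z s e1); auto.
    - intros y Hy. unfold T, tproj. apply riesz_2. apply Hg; auto.
    - intros j Hj. apply HD; auto. }
  assert (I3 : mink n Wt (fs s t) = mink n Zp (fst s t)).
  { apply (key1 n (fun y => T s y) (fun y => fs s y) _ _ Z t e2); auto.
    - intros y Hy. unfold T, tproj. apply riesz_1. apply Hg; auto.
    - intros j Hj. apply HD; auto. }
  assert (I4 : mink n Wt (ft s t) = mink n Zp (ftt s t)).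
  { apply (key1 n (fun y => T s y) (fun y => ft s y) _ _ Z t e2); auto.
    - intros y Hy. unfold T, tproj. apply riesz_2. apply Hg; auto.
    - intros j Hj. apply HD; auto. }
  set (a := tcoef_a n (fs s t) (ft s t) Z).
  set (b := tcoef_b n (fs s t) (ft s t) Z).
  assert (HT : T s t = lin2 a b (fs s t) (ft s t)) by reflexivity.
  assert (N1 : mink n Ws (T s t) = 0).
  { apply (keyN n (fun x => T x t) Ws s e1); auto.
    intros y Hy. apply Hll; auto. }
  assert (N2 : mink n Wt (T s t) = 0).
  { apply (keyN n (fun y => T s y) Wt t e2); auto.
    intros y Hy. apply Hll; auto. }
  rewrite mink_sym, HT, mink_lin, !(mink_sym n _ Ws), I1, I2 in N1.
  rewrite mink_sym, HT, mink_lin, !(mink_sym n _ Wt), I3, I4 in N2.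
  assert (Sch : forall i, (i <= n)%nat -> fst s t i = fts s t i).
  { intros i Hi.
    apply (schwarz_gen U (fun x y => f x y i) (fun x y => fs x y i) (fun x y => ft x y i)
       (fun x y => fst x y i) (fun x y => fts x y i)); auto.
    - intros u v H. destruct (HD u v H i Hi) as (h1&h2&h3&h4&h5&h6). auto.
    - apply HCt; auto.
    - apply HCt; auto. }
  assert (HCB : mink n Zp (fst s t) = mink n Zp (fts s t)).
  { apply mink_ext; auto. }
  rewrite HCB in N2.
  assert (Hp : forall al be, mink n (lin2 al be (fs s t) (ft s t)) Zp = 0).
  { intros al be. rewrite mink_lin, !(mink_sym n _ Zp). unfold Zp, nproj.
    rewrite !mink_sub. change (tproj n (fs s t) (ft s t) Z) with (T s t).
    unfold T, tproj. rewrite riesz_1, riesz_2 by (apply Hg; auto).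
    rewrite !(mink_sym n Z). ring. }
  assert (Cl1 : forall x1 x2 : R,
       mink n (sff n (fs s t) (ft s t) (fss s t) (fst s t) (fts s t) (ftt s t) a b x1 x2) Zp = 0).
  { intros x1 x2. unfold sff, nproj at 1. rewrite mink_sub.
    unfold tproj, riesz. rewrite Hp. rewrite mink_4.
    rewrite !(mink_sym n _ Zp). rewrite HCB.
    transitivity (x1 * (a * mink n Zp (fss s t) + b * mink n Zp (fts s t)) +
                  x2 * (a * mink n Zp (fts s t) + b * mink n Zp (ftt s t))).
    ring. rewrite N1, N2. ring. }
  split; [exact Cl1|split].
  - intros i Hi. unfold shape. rewrite !Cl1. apply riesz_0.
  - exists Ws, Wt. split.
    + intros i Hi. split; [apply HWs|apply HWt]; auto.
    + intros i Hi. unfold tproj. rewrite !mink_lin. rewrite I1, I2, I3, I4, HCB, N1, N2. apply riesz_0.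
Qed.
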